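(* Consider the Bregman proximal augmented Lagrangian method described in the context with $\psi=\frac12\|\cdot\|^2$ (so that $x^{k+1}=x^k-\sigma_kv^k$), $\phi$ Legendre, and $0\le\rho_k\le\rho<1$. Let $(x^\star,y^\star)\in\operatorname{zer}T$ with $y^\star\in\operatorname{dom}\phi$. Then $\{s^k\}_{k\ge0}$ is bounded, $v^k\to0$, and $\langle u^k,y^{k+1}-y^\star\rangle\to0$.
   Context: Let $f\in\Gamma_0(\mathbb{R}^n)$, $g\in\Gamma_0(\mathbb{R}^m)$ (proper lsc convex functions with values in $\mathbb{R}\cup\{+\infty\}$), $A\in\mathbb{R}^{m\times n}$, $b\in\mathbb{R}^m$, $\mathcal{A}(x)=Ax-b$. The Lagrangian is $L(x,y)=f(x)+\langle\mathcal{A}(x),y\rangle-g^*(y)$, $g^*$ the convex conjugate, and the KKT operator is $T(x,y)=(\partial f(x)+A^\top y)\times(\partial g^*(y)+b-Ax)$, which is maximal monotone; $\operatorname{zer}T=T^{-1}(0)$ is the set of saddle points of $L$. A function $h\in\Gamma_0$ is Legendre if it is essentially smooth ($\operatorname{int}\operatorname{dom}h\ne\emptyset$, differentiable there, $\|\nabla h(z^\nu)\|\to\infty$ whenever $\operatorname{int}\operatorname{dom}h\ni z^\nu\to z\in\operatorname{bdry}\operatorname{dom}h$) and essentially strictly convex (strictly convex on every convex subset of $\operatorname{dom}\partial h$); $\nabla h^*$ is then the inverse of $\nabla h$ on the interiors of the domains. $D_h(a,c)=h(a)-h(c)-\langle\nabla h(c),a-c\rangle$ for $a\in\operatorname{dom}h$,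 $c\in\operatorname{int}\operatorname{dom}h$, $+\infty$ otherwise. Let $\psi\in\Gamma_0(\mathbb{R}^n)$, $\phi\in\Gamma_0(\mathbb{R}^m)$ be Legendre, $\Phi(x,y)=\psi(x)+\phi(y)$, and assume $\operatorname{int}\operatorname{dom}\Phi\cap\operatorname{dom}T\ne\emptyset$. Bregman proximal augmented Lagrangian method: given $x^0\in\operatorname{int}\operatorname{dom}\psi$, $y^0\in\operatorname{int}\operatorname{dom}\phi$, step sizes $\sigma_k\ge\sigma>0$ and $\rho_k\in[0,1)$, it generates $s^k\in\operatorname{dom}\psi$, $x^{k+1},y^{k+1},v^k,u^k$ with $(v^k,u^k)\in T(s^k,y^{k+1})$, $x^{k+1}=\nabla\psi^*(\nabla\psi(x^k)-\sigma_kv^k)\in\operatorname{int}\operatorname{dom}\psi$, $y^{k+1}=\nabla\phi^*(\nabla\phi(y^k)-\sigma_ku^k)\in\operatorname{int}\operatorname{dom}\phi$, and $D_\psi(s^k,x^{k+1})\le\rho_k\big(D_\psi(s^k,x^k)+D_\phi(y^{k+1},y^k)\big)$. (This is the inexact Bregman proximal point algorithm for $T$ with $\Phi$, $z^k=(x^k,y^k)$, $p^k=(s^k,y^{k+1})$, $w^k=(v^k,u^k)$.) *)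

(* Defs.v *)
From HB Require Import structures.
From mathcomp Require Import all_boot all_order all_algebra.
From mathcomp Require Import all_classical all_reals all_analysis.
Set Implicit Arguments. Unset Strict Implicit. Unset Printing Implicit Defensive.
Import Order.TTheory GRing.Theory Num.Theory.
Import numFieldNormedType.Exports.
Local Open Scope classical_set_scope.
Local Open Scope ring_scope.

Section Defs.
Variable R : realType.

Definition ip (n : nat) (x y : 'rV[R]_n) : R := \sum_(i < n) x ord0 i * y ord0 i.

Local Open Scope ereal_scope.

Definition edom (n : nat) (h : 'rV[R]_n -> \bar R) : set 'rV[R]_n :=
  [set x | h x < +oo].

Definition proper_fun (n : nat) (h : 'rV[R]_n -> \bar R) : Prop :=
  (forall x, h x != -oo) /\ (exists x, h x < +oo).

Definition convex_efun (n : nat) (h : 'rV[R]_n -> \bar R) : Prop :=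
  forall (x y : 'rV[R]_n) (t : R), (0 <= t <= 1)%R ->
    h (t *: x + (1 - t) *: y)%R <= t%:E * h x + (1 - t)%:E * h y.

Definition Gamma0 (n : nat) (h : 'rV[R]_n -> \bar R) : Prop :=
  [/\ proper_fun h, lower_semicontinuous h & convex_efun h].

Definition conjf (n : nat) (h : 'rV[R]_n -> \bar R) : 'rV[R]_n -> \bar R :=
  fun y => ereal_sup [set (ip x y)%:E - h x | x in [set: 'rV[R]_n]].

Definition subdiff (n : nat) (h : 'rV[R]_n -> \bar R) (x v : 'rV[R]_n) : Prop :=
  h x \is a fin_num /\ forall z, h x + (ip v (z - x)%R)%:E <= h z.

Definition is_grad (n : nat) (h : 'rV[R]_n -> \bar R) (z g : 'rV[R]_n) : Prop :=
  h z \is a fin_num /\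
  forall e : R, (0 < e)%R -> exists2 d : R, (0 < d)%R &
    forall w : 'rV[R]_n, (`|w| < d)%R ->
      h (z + w)%R \is a fin_num /\
      (`|fine (h (z + w)%R) - fine (h z) - ip g w| <= e * `|w|)%R.

(* the gradient (meaningful where h is differentiable; 0 otherwise) *)
Definition grad (n : nat) (h : 'rV[R]_n -> \bar R) (z : 'rV[R]_n) : 'rV[R]_n :=
  xget 0%R [set g | is_grad h z g].

Definition convex_set (n : nat) (C : set 'rV[R]_n) : Prop :=
  forall x y (t : R), C x -> C y -> (0 <= t <= 1)%R -> C (t *: x + (1 - t) *: y)%R.

Definition ess_smooth (n : nat) (h : 'rV[R]_n -> \bar R) : Prop :=
  [/\ interior (edom h) !=set0,
      (forall z, interior (edom h) z -> exists g, is_grad h z g) &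
      (forall (z : 'rV[R]_n) (zs : nat -> 'rV[R]_n),
         closure (edom h) z -> ~ interior (edom h) z ->
         (forall k, interior (edom h) (zs k)) -> zs @ \oo --> z ->
         forall M : R, exists N, forall k, (N <= k)%N -> (M < `|grad h (zs k)|)%R)].

Definition ess_strictly_convex (n : nat) (h : 'rV[R]_n -> \bar R) : Prop :=
  forall C : set 'rV[R]_n, convex_set C -> C `<=` [set x | exists v, subdiff h x v] ->
    forall x y (t : R), C x -> C y -> x != y -> (0 < t < 1)%R ->
      h (t *: x + (1 - t) *: y)%R < t%:E * h x + (1 - t)%:E * h y.

Definition Legendre (n : nat) (h : 'rV[R]_n -> \bar R) : Prop :=
  [/\ Gamma0 h, ess_smooth h & ess_strictly_convex h].

Definition Bregman (n : nat) (h : 'rV[R]_n -> \bar R) (a c : 'rV[R]_n) : \bar R :=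
  if `[< edom h a /\ interior (edom h) c >] then
    (fine (h a) - fine (h c) - ip (grad h c) (a - c))%R%:E
  else +oo.

(* KKT operator: (w1,w2) \in T(x,y) with T(x,y) = (df(x) + A^T y) x (dg^*(y) + b - Ax).
   Row-vector convention: A^T y is  y *m A,  A x is  x *m A^T. *)
Definition KKT (n m : nat) (f : 'rV[R]_n -> \bar R) (g : 'rV[R]_m -> \bar R)
  (A : 'M[R]_(m, n)) (b : 'rV[R]_m) (x : 'rV[R]_n) (y : 'rV[R]_m)
  (w1 : 'rV[R]_n) (w2 : 'rV[R]_m) : Prop :=
  (exists2 a, subdiff f x a & w1 = a + y *m A)%R /\
  (exists2 c, subdiff (conjf g) y c & w2 = c + b - x *m A^T)%R.

Definition half_sqnorm (n : nat) (x : 'rV[R]_n) : \bar R := (2^-1 * ip x x)%:E.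

End Defs.

(* Main.v *)
Require Import Defs.
From HB Require Import structures.
From mathcomp Require Import all_boot all_order all_algebra.
From mathcomp Require Import all_classical all_reals all_analysis.
From mathcomp Require Import ring lra.
Import Order.TTheory GRing.Theory Num.Theory.
Import numFieldNormedType.Exports.
Local Open Scope classical_set_scope.
Local Open Scope ring_scope.

Section IP.
Variable R : realType.
Variable n : nat.
Implicit Types x y z : 'rV[R]_n.

Lemma ipC x y : ip x y = ip y x.
Proof. by apply: eq_bigr => i _; rewrite mulrC. Qed.
Lemma ipDl x y z : ip (x + y) z = ip x z + ip y z.
Proof. by rewrite /ip -big_split; apply: eq_bigr => i _; rewrite mxE mulrDl. Qed.
Lemma ipZl a x z : ip (a *: x) z = a * ip x z.
Proof. by rewrite /ip mulr_sumr; apply: eq_bigr => i _; rewrite mxE mulrA. Qed.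
Lemma ipNl x z : ip (- x) z = - ip x z.
Proof. by rewrite -scaleN1r ipZl mulN1r. Qed.
Lemma ipBl x y z : ip (x - y) z = ip x z - ip y z.
Proof. by rewrite ipDl ipNl. Qed.
Lemma ipDr x y z : ip z (x + y) = ip z x + ip z y.
Proof. by rewrite ipC ipDl !(ipC z). Qed.
Lemma ipZr a x z : ip z (a *: x) = a * ip z x.
Proof. by rewrite ipC ipZl ipC. Qed.
Lemma ipNr x z : ip z (- x) = - ip z x.
Proof. by rewrite ipC ipNl ipC. Qed.
Lemma ipBr x y z : ip z (x - y) = ip z x - ip z y.
Proof. by rewrite ipDr ipNr. Qed.
Lemma ip0l z : ip 0 z = 0.
Proof. by rewrite /ip big1 // => i _; rewrite mxE mul0r. Qed.
Lemma ip0r z : ip z 0 = 0.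
Proof. by rewrite ipC ip0l. Qed.
Lemma ip_ge0 x : 0 <= ip x x.
Proof. by rewrite /ip sumr_ge0 // => i _; rewrite -expr2 sqr_ge0. Qed.

Lemma nrm_coord x i : `|x ord0 i| <= `|x|.
Proof.
have /mapP[j Hj ->] : `|x ord0 i| \in [seq `|x k.1 k.2| | k : 'I_1 * 'I_n].
  by apply/mapP; exists (ord0, i) => //=; rewrite mem_enum.
by rewrite [leRHS]/Num.norm /= mx_normrE; apply/bigmax_geP; right => /=; exists j.
Qed.

Lemma nrm_le_ip x : `|x| ^+ 2 <= ip x x.
Proof.
have [->|x0] := eqVneq `|x| 0; first by rewrite expr0n /= ip_ge0.
have [[i j] /= xi] := mx_norm_neq0 x0.
rewrite -[`|x|]/(mx_norm x) xi.
have -> : i = ord0 by apply: ord_inj; case: (i) => -[].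
rewrite real_normK ?num_real // /ip (bigD1 j) //= -expr2 lerDl.
by rewrite sumr_ge0 // => k _; rewrite -expr2 sqr_ge0.
Qed.

Lemma ip_le_nrm x y : `|ip x y| <= n%:R * (`|x| * `|y|).
Proof.
rewrite /ip; apply: le_trans (ler_norm_sum _ _ _) _.
have -> : n%:R * (`|x| * `|y|) = \sum_(i < n) (`|x| * `|y|).
  by rewrite sumr_const card_ord mulr_natl.
apply: ler_sum => i _.
by rewrite normrM ler_pM ?nrm_coord.
Qed.

Lemma ipxx_le_nrm x : ip x x <= n%:R * `|x| ^+ 2.
Proof. by rewrite expr2; apply: le_trans (ler_norm _) (ip_le_nrm _ _). Qed.

Lemma nrm_le_1ip x : `|x| <= 1 + ip x x.
Proof.
apply: le_trans (_ : 1 + `|x| ^+ 2 <= _); last by rewrite lerD2l nrm_le_ip.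
have [x1|x1] := leP `|x| 1; first by rewrite ler_wpDr ?sqr_ge0 //.
by rewrite ler_wpDl // expr2 ler_peMl // ltW.
Qed.

Lemma ip_par x y : ip (x + y) (x + y) <= 2 * ip x x + 2 * ip y y.
Proof.
have := ip_ge0 (x - y).
rewrite !ipBl !ipDl !ipBr !ipDr (ipC y x); lra.
Qed.
End IP.

Lemma ip_mulmx {R : realType} {n m} (A : 'M[R]_(m, n)) (x : 'rV[R]_n) (y : 'rV[R]_m) :
  ip (y *m A) x = ip (x *m A^T) y.
Proof.
rewrite /ip; under eq_bigr do rewrite mxE big_distrl.
rewrite exchange_big; apply: eq_bigr => j _; rewrite mxE big_distrl.
by apply: eq_bigr => i _; rewrite !mxE /=; ring.
Qed.
Arguments ipC {R n}. Arguments ipDl {R n}. Arguments ipZl {R n}. Arguments ipNl {R n}.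
Arguments ipBl {R n}. Arguments ipDr {R n}. Arguments ipZr {R n}. Arguments ipNr {R n}.
Arguments ipBr {R n}. Arguments ip0l {R n}. Arguments ip0r {R n}. Arguments ip_ge0 {R n}.
Arguments nrm_coord {R n}. Arguments nrm_le_ip {R n}. Arguments ip_le_nrm {R n}.
Arguments ipxx_le_nrm {R n}. Arguments nrm_le_1ip {R n}. Arguments ip_par {R n}.
Section CVX.
Variable R : realType.
Variable d : nat.
Implicit Types (h : 'rV[R]_d -> \bar R) (z w p q : 'rV[R]_d).

Lemma fin_dom h z : proper_fun h -> edom h z -> h z \is a fin_num.
Proof. by move=> [hn _] hz; rewrite fin_numE hn /= (lt_eqF hz). Qed.

Lemma fin_or_inf h z : proper_fun h -> h z \is a fin_num \/ h z = +oo%E.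
Proof.
move=> [hn _]; case E: (h z == +oo%E); first by right; apply/eqP.
by left; rewrite fin_numE hn E.
Qed.

Lemma small_t (c e : R) : 0 <= c -> 0 < e -> exists t, [/\ 0 < t, t < 1 & t * c < e].
Proof.
move=> c0 e0; set mu := Num.min e 1.
have mu0 : 0 < mu by rewrite lt_min e0 ltr01.
have mue : mu <= e by rewrite ge_min lexx.
have mu1 : mu <= 1 by rewrite ge_min lexx orbT.
exists (mu / (2 * (c + 1))).
have E : mu / (2 * (c + 1)) * (2 * (c + 1)) = mu.
  by rewrite divfK // mulf_neq0 // gt_eqF // ltr_wpDl.
move: (mu / (2 * (c + 1))) E => t E.
split; nra.
Qed.

Lemma grad_subgrad h z q : proper_fun h -> convex_efun h -> is_grad h z q ->
  forall w, ((fine (h z) + ip q (w - z))%:E <= h w)%E.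
Proof.
move=> hp hc [hz hg] w.
have [hw|->] := fin_or_inf h w hp; last by rewrite leey.
rewrite -(fineK hw) lee_fin; apply/ler_addgt0Pr => e e0.
set c := `|w - z|.
have c0 : 0 <= c by rewrite normr_ge0.
pose e' := e / (c + 1).
have e'E : e' * (c + 1) = e by rewrite divfK // gt_eqF // ltr_wpDl.
have e'0 : 0 < e' by rewrite divr_gt0 // ltr_wpDl.
have [del del0 Hd] := hg e' e'0.
have [t [t0 t1 tc]] := small_t _ _ c0 del0.
have nw : `|t *: (w - z)| = t * c by rewrite normrZ ger0_norm // ltW.
have := Hd (t *: (w - z)); rewrite nw => /(_ tc) [hzw Hn].
have eq : t *: w + (1 - t) *: z = z + t *: (w - z).
  by apply/rowP => i; rewrite !mxE; ring.
have t01 : 0 <= t <= 1 by rewrite !ltW.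
have Hc := hc w z t t01.
rewrite eq -(fineK hzw) -(fineK hw) -(fineK hz) -!EFinM -EFinD lee_fin in Hc.
move: Hn; rewrite ipZr ler_norml => /andP[Hn _].
set F := fine (h (z + t *: (w - z))) in Hc Hn.
set I := ip q (w - z) in Hn *.
have H1 : t * (I - e' * c - (fine (h w) - fine (h z))) <= 0 by lra.
have H2 : I - e' * c - (fine (h w) - fine (h z)) <= 0 by nra.
nra.
Qed.

Lemma subgrad_grad_eq h z p q : is_grad h z q ->
  (forall w, ((fine (h z) + ip p (w - z))%:E <= h w)%E) -> p = q.
Proof.
move=> [hz hg] hs; apply/eqP; rewrite -subr_eq0; apply/eqP.
set D := p - q.
have [/eqP|Dn] := eqVneq `|D| 0; first by rewrite normr_eq0 => /eqP.
exfalso.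
have Dp : 0 < `|D| by rewrite lt_neqAle eq_sym Dn normr_ge0.
have [del del0 Hd] := hg (`|D| / 2) (divr_gt0 Dp (ltr0Sn _ 1)).
have [t [t0 t1 tc]] := small_t _ _ (normr_ge0 D) del0.
have nw : `|t *: D| = t * `|D| by rewrite normrZ ger0_norm // ltW.
have := Hd (t *: D); rewrite nw => /(_ tc) [hzw Hn].
have Hs := hs (z + t *: D).
rewrite (_ : z + t *: D - z = t *: D) in Hs; last first.
  by apply/rowP => i; rewrite !mxE; ring.
rewrite -(fineK hzw) lee_fin in Hs.
move: Hn; rewrite ler_norml => /andP[_ Hn].
have : ip p (t *: D) - ip q (t *: D) <= `|D| / 2 * (t * `|D|) by lra.
rewrite -ipBl ipZr -/D => H.
have H3 : t * `|D| ^+ 2 <= t * ip D D.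
  by apply: ler_wpM2l; [exact: ltW | exact: nrm_le_ip].
have H4 : 0 < t * `|D| ^+ 2 by rewrite mulr_gt0 // exprn_gt0.
lra.
Qed.
End CVX.
Arguments fin_dom {R d h z}. Arguments fin_or_inf {R d} h z.
Arguments small_t {R c e}. Arguments grad_subgrad {R d h z q}.
Arguments subgrad_grad_eq {R d h z p q}.
Section CONJ.
Variable R : realType.
Variable d : nat.
Implicit Types (h : 'rV[R]_d -> \bar R) (z w p q : 'rV[R]_d).

Lemma conj_ub h p x : conjf h p \is a fin_num -> h x \is a fin_num ->
  ip x p - fine (h x) <= fine (conjf h p).
Proof.
move=> hP hx; rewrite -lee_fin EFinB (fineK hP) (fineK hx).
by apply: ereal_sup_ubound; exists x.
Qed.

Lemma conj_subgrad h p y' q : proper_fun h -> convex_efun h ->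
  is_grad (conjf h) p y' -> is_grad h y' q ->
  forall w, ((fine (h y') + ip p (w - y'))%:E <= h w)%E.
Proof.
move=> hp hc Hgp Hgq.
have Hq := grad_subgrad hp hc Hgq.
have hy : h y' \is a fin_num by case: Hgq.
case: Hgp => hP hg.
set P := fine (conjf h p).
set fy := fine (h y').
set c := ip y' q - fy.
have key : P <= ip y' p - fy.
  apply/ler_addgt0Pr => e e0.
  set D := q - p; set cD := `|D|.
  have c0 : 0 <= cD by rewrite normr_ge0.
  pose e' := e / (cD + 1).
  have e'E : e' * (cD + 1) = e by rewrite divfK // gt_eqF // ltr_wpDl.
  have e'0 : 0 < e' by rewrite divr_gt0 // ltr_wpDl.
  have [del del0 Hd] := hg e' e'0.
  have [t [t0 t1 tc]] := small_t c0 del0.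
  have nw : `|t *: D| = t * cD by rewrite normrZ ger0_norm // ltW.
  have := Hd (t *: D); rewrite nw => /(_ tc) [hF Hn].
  have Hub : (conjf h (p + t *: D) <= ((1 - t) * P + t * c)%:E)%E.
    apply: ge_ereal_sup => _ [x _ <-].
    have [hx|->] := fin_or_inf h x hp; last by rewrite addeNy leNye.
    rewrite -(fineK hx) -EFinB lee_fin.
    have Ha := @conj_ub h p x hP hx.
    have Hb := Hq x; rewrite -(fineK hx) lee_fin in Hb.
    have E1 : ip x (p + t *: D) = ip x p + t * ip x D by rewrite ipDr ipZr.
    have E2 : ip q (x - y') = ip x p + ip x D - ip y' q.
      by rewrite /D ipBr !(ipC q) ipBr; ring.
    rewrite E1; rewrite E2 in Hb.
    have H1 : (1 - t) * (ip x p - fine (h x)) <= (1 - t) * P.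
      by apply: ler_wpM2l; [lra | exact: Ha].
    have H2 : t * (ip x p + ip x D - fine (h x)) <= t * c.
      by apply: ler_wpM2l; [lra | rewrite /c /fy; lra].
    lra.
  rewrite -(fineK hF) lee_fin in Hub.
  move: Hn; rewrite ler_norml ipZr => /andP[Hn _].
  set F := fine (conjf h (p + t *: D)) in Hub Hn.
  have E3 : c - ip y' D = ip y' p - fy by rewrite /c /D ipBr; ring.
  have H1 : t * (P + ip y' D - e' * cD - c) <= 0 by move: Hn Hub; rewrite /P /c /fy; lra.
  have H2 : P + ip y' D - e' * cD - c <= 0 by nra.
  have H3 : e' * cD <= e by nra.
  lra.
move=> w.
have [hw|->] := fin_or_inf h w hp; last by rewrite leey.
rewrite -(fineK hw) lee_fin.
have := @conj_ub h p w hP hw.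
move=> H; move: key H; rewrite /P /fy ipBr (ipC p w) (ipC p y'); lra.
Qed.
End CONJ.

Section ALG.
Variable R : realType.

Lemma hs_fin n (z : 'rV[R]_n) : half_sqnorm z \is a fin_num.
Proof. by []. Qed.

Lemma hs_subgrad n (c : 'rV[R]_n) :
  forall z, ((fine (half_sqnorm c) + ip c (z - c))%:E <= half_sqnorm z)%E.
Proof.
move=> z; rewrite /half_sqnorm /= lee_fin.
have := ip_ge0 (z - c); rewrite !(ipBl, ipBr) (ipC c z); lra.
Qed.

Lemma hs_grad n (c : 'rV[R]_n) : is_grad (@half_sqnorm R n) c c.
Proof.
split; first by [].
move=> e e0; exists (e / (n%:R + 1)); first by rewrite divr_gt0 // ltr_wpDl.
move=> w; rewrite ltr_pdivlMr ?ltr_wpDl // => hw; split; first by [].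
rewrite /half_sqnorm /= !(ipDl, ipDr) (ipC w c).

have -> : 2^-1 * (ip c c + ip c w + (ip c w + ip w w)) - 2^-1 * ip c c - ip c w
  = 2^-1 * ip w w by rewrite !mulrDr; lra.
rewrite ger0_norm; last by rewrite mulr_ge0 // ip_ge0.
have H1 := ipxx_le_nrm w.
have H2 : 0 <= `|w| by [].
have H3 : `|w| * n%:R <= e.
  have : `|w| * n%:R <= `|w| * (n%:R + 1) by rewrite ler_wpM2l // lerDl.
  lra.
have : n%:R * `|w| ^+ 2 <= e * `|w| by rewrite expr2; nra.
have : 0 <= e * `|w| by rewrite mulr_ge0 // ltW.
lra.
Qed.

Lemma hs_gradE n (c : 'rV[R]_n) : grad (@half_sqnorm R n) c = c.
Proof.
have := @xgetPex _ 0 [set g | is_grad (@half_sqnorm R n) c g] (ex_intro _ c (@hs_grad n c)).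
move=> /= Hg; symmetry; exact: subgrad_grad_eq Hg (@hs_subgrad n c).
Qed.

Lemma hs_Bregman n (a c : 'rV[R]_n) :
  Bregman (@half_sqnorm R n) a c = (2^-1 * ip (a - c) (a - c))%:E.
Proof.
rewrite /Bregman asboolT; last first.
  split; first by rewrite /edom /= ltey.
  have -> : edom (@half_sqnorm R n) = setT.
    by rewrite predeqE => z; split => // _; rewrite /edom /= ltey.
  by rewrite interiorT.
rewrite hs_gradE /half_sqnorm /=; congr (_%:E).
rewrite !(ipBl, ipBr) (ipC a c); field => //.
Qed.

Lemma xpart n (x0 x1 s v xs : 'rV[R]_n) (sg : R) : x1 = x0 - sg *: v ->
  2^-1 * ip (x1 - xs) (x1 - xs) = 2^-1 * ip (x0 - xs) (x0 - xs)
   - sg * ip v (s - xs) + 2^-1 * ip (s - x1) (s - x1) - 2^-1 * ip (s - x0) (s - x0).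
Proof.
move=> ->; rewrite !(ipDl, ipBl, ipZl, ipDr, ipBr, ipZr, ipNl, ipNr).
rewrite ?(ipC xs x0) ?(ipC s x0) ?(ipC v x0) ?(ipC s xs) ?(ipC v xs) ?(ipC v s).
by field.
Qed.

Lemma ypart m (G0 G1 u y0 y1 ys : 'rV[R]_m) (f0 f1 fs sg : R) : G1 = G0 - sg *: u ->
  fs - f1 - ip G1 (ys - y1) =
  (fs - f0 - ip G0 (ys - y0)) - (f1 - f0 - ip G0 (y1 - y0)) - sg * ip u (y1 - ys).
Proof.
move=> ->; rewrite !(ipDl, ipBl, ipZl, ipDr, ipBr, ipZr, ipNl, ipNr).
ring.
Qed.

Lemma sub_mono n (h : 'rV[R]_n -> \bar R) x x' a a' :
  subdiff h x a -> subdiff h x' a' -> 0 <= ip a (x - x') - ip a' (x - x').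
Proof.
move=> [hx Ha] [hx' Ha'].
have := Ha x'; have := Ha' x.
rewrite -(fineK hx) -(fineK hx') -!EFinD !lee_fin.
rewrite !(ipBr); lra.
Qed.

Lemma kkt_mono n m f g (A : 'M[R]_(m, n)) b x y w1 w2 x' y' :
  KKT f g A b x y w1 w2 -> KKT f g A b x' y' 0 0 ->
  0 <= ip w1 (x - x') + ip w2 (y - y').
Proof.
move=> [[a ha ->] [c hc ->]] [[a' ha' e1] [c' hc' e2]].
have Ha := @sub_mono _ _ _ _ _ _ ha ha'. have Hc := @sub_mono _ _ _ _ _ _ hc hc'.
have ea : a' = - (y' *m A) by apply/eqP; rewrite -addr_eq0 -e1.
have ec : c' = x' *m A^T - b.
  by apply/eqP; rewrite -subr_eq0 opprB addrA -e2.
rewrite ea ec in Ha Hc.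
have key := ip_mulmx A (x - x') (y - y').
rewrite !(mulmxBl) in key.
move: Ha Hc key; rewrite !(ipDl, ipBl, ipNl, ipDr, ipBr). lra.
Qed.
End ALG.
Arguments hs_Bregman {R n}. Arguments xpart {R n x0 x1} s v xs sg.
Arguments ypart {R m G0 G1 u} y0 y1 ys f0 f1 fs sg.
Arguments kkt_mono {R n m f g A b x y w1 w2 x' y'}.
Theorem mainTheorem13 (R : realType) (n m : nat)
  (f : 'rV[R]_n -> \bar R) (g : 'rV[R]_m -> \bar R)
  (A : 'M[R]_(m, n)) (b : 'rV[R]_m) (phi : 'rV[R]_m -> \bar R)
  (sigma rho : nat -> R) (sigma0 rho0 : R)
  (x s v : nat -> 'rV[R]_n) (y u : nat -> 'rV[R]_m)
  (xstar : 'rV[R]_n) (ystar : 'rV[R]_m) :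
  Gamma0 f -> Gamma0 g -> Legendre phi ->
  (* int dom Phi meets dom T  (dom psi = R^n) *)
  (exists x0 y0 w1 w2, interior (edom phi) y0 /\ KKT f g A b x0 y0 w1 w2) ->
  0 < sigma0 -> (forall k, sigma0 <= sigma k) ->
  rho0 < 1 -> (forall k, 0 <= rho k <= rho0) ->
  interior (edom phi) (y 0%N) ->
  (forall k, KKT f g A b (s k) (y k.+1) (v k) (u k)) ->
  (forall k, x k.+1 = x k - sigma k *: v k) ->
  (forall k, interior (edom phi) (y k.+1)) ->
  (forall k, is_grad (conjf phi) (grad phi (y k) - sigma k *: u k) (y k.+1)) ->
  (forall k, (Bregman (@half_sqnorm R n) (s k) (x k.+1)
     <= (rho k)%:E * (Bregman (@half_sqnorm R n) (s k) (x k)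
                     + Bregman phi (y k.+1) (y k)))%E) ->
  KKT f g A b xstar ystar 0 0 ->
  edom phi ystar ->
  [/\ exists M : R, forall k, `|s k| <= M,
      v @ \oo --> (0 : 'rV[R]_n) &
      (fun k => ip (u k) (y k.+1 - ystar)) @ \oo --> (0 : R)].
Proof.
move=> Gf Gg [[phiP _ phiC] [_ phiGr _] _] _ s0 Hsig r1 Hrho Hy0 Hkkt Hx Hyint Hy Hcrit Hstar Hys.
have intk : forall k, interior (edom phi) (y k) by case.
pose G k := grad phi (y k).
have gradP : forall k, is_grad phi (y k) (G k).
  move=> k; have [g0 Hg] := phiGr _ (intk k).
  exact: (@xgetPex _ 0 [set g1 | is_grad phi (y k) g1] (ex_intro _ g0 Hg)).
have finy : forall k, phi (y k) \is a fin_num.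
  by move=> k; apply: (fin_dom phiP); apply: interior_subset; exact: intk.
have finys : phi ystar \is a fin_num by exact: fin_dom phiP Hys.
have subG : forall k z, ((fine (phi (y k)) + ip (G k) (z - y k))%:E <= phi z)%E.
  by move=> k; exact: grad_subgrad phiP phiC (gradP k).
have Gupd : forall k, G k.+1 = G k - sigma k *: u k.
  move=> k; symmetry; apply: subgrad_grad_eq (gradP k.+1) _.
  exact: conj_subgrad phiP phiC (Hy k) (gradP k.+1).
pose a k := 2^-1 * ip (x k - xstar) (x k - xstar).
pose Dy k := fine (phi ystar) - fine (phi (y k)) - ip (G k) (ystar - y k).
pose Dyy k := fine (phi (y k.+1)) - fine (phi (y k)) - ip (G k) (y k.+1 - y k).
pose S k := 2^-1 * ip (s k - x k) (s k - x k).
pose S' k := 2^-1 * ip (s k - x k.+1) (s k - x k.+1).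
pose M k := ip (v k) (s k - xstar) + ip (u k) (y k.+1 - ystar).
pose E k := a k + Dy k.
have Dy0 : forall k, 0 <= Dy k.
  move=> k; have := subG k ystar; rewrite -(fineK finys) lee_fin /Dy; lra.
have Dyy0 : forall k, 0 <= Dyy k.
  move=> k; have := subG k (y k.+1); rewrite -(fineK (finy k.+1)) lee_fin /Dyy; lra.
have M0 : forall k, 0 <= M k by move=> k; exact: kkt_mono (Hkkt k) Hstar.
have S0 : forall k, 0 <= S k by move=> k; rewrite mulr_ge0 ?ip_ge0.
have S'0 : forall k, 0 <= S' k by move=> k; rewrite mulr_ge0 ?ip_ge0.
have a0 : forall k, 0 <= a k by move=> k; rewrite mulr_ge0 ?ip_ge0.
have crit : forall k, S' k <= rho k * (S k + Dyy k).
  move=> k; have := Hcrit k.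
  rewrite !hs_Bregman /Bregman asboolT; last first.
    by split; [apply: interior_subset; exact: intk | exact: intk].
  by rewrite -EFinD -EFinM lee_fin.
have step : forall k, E k.+1 + sigma k * M k + (1 - rho k) * (S k + Dyy k) <= E k.
  move=> k.
  have xp : a k.+1 = a k - sigma k * ip (v k) (s k - xstar) + S' k - S k :=
    xpart (s k) (v k) xstar (sigma k) (Hx k).
  have yp : Dy k.+1 = Dy k - Dyy k - sigma k * ip (u k) (y k.+1 - ystar) :=
    ypart (y k) (y k.+1) ystar (fine (phi (y k))) (fine (phi (y k.+1)))
      (fine (phi ystar)) (sigma k) (Gupd k).
  have cr := crit k.
  rewrite /E /M; lra.
have sig0 : forall k, 0 < sigma k by move=> k; exact: lt_le_trans s0 (Hsig k).
have rh1 : forall k, 0 <= 1 - rho k.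
  by move=> k; have /andP[_ h] := Hrho k; lra.
have E0 : forall k, 0 <= E k by move=> k; rewrite /E addr_ge0.
have Edec : forall k, E k.+1 <= E k.
  move=> k; have := step k.
  have : 0 <= sigma k * M k by rewrite mulr_ge0 // ltW.
  have : 0 <= (1 - rho k) * (S k + Dyy k) by rewrite mulr_ge0 // addr_ge0.
  lra.
have Ele : forall j k, E (j + k) <= E k.
  move=> j k; elim: j => [|j IH]; first exact: lexx.
  exact: le_trans (Edec _) IH.
have Ele0 : forall k, E k <= E 0 by move=> k; have := Ele k 0; rewrite addr0.
pose del k := E k - E k.+1.
have del0 : forall k, 0 <= del k by move=> k; rewrite /del subr_ge0.
have delE : forall k, del k <= E 0.
  move=> k; have := Ele0 k; have := E0 k.+1; rewrite /del; lra.
have r0 : 0 < 1 - rho0 by lra.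
have Mb : forall k, sigma0 * M k <= del k.
  move=> k; have := step k.
  have : 0 <= (1 - rho k) * (S k + Dyy k) by rewrite mulr_ge0 // addr_ge0.
  have : sigma0 * M k <= sigma k * M k by rewrite ler_wpM2r.
  rewrite /del; lra.
have Sb : forall k, (1 - rho0) * (S k + Dyy k) <= del k.
  move=> k; have := step k.
  have : 0 <= sigma k * M k by rewrite mulr_ge0 // ltW.
  have : (1 - rho0) * (S k + Dyy k) <= (1 - rho k) * (S k + Dyy k).
    apply: ler_wpM2r; first by rewrite addr_ge0.
    by have /andP[_ h] := Hrho k; lra.
  rewrite /del; lra.
have S'b : forall k, S' k <= S k + Dyy k.
  move=> k; apply: le_trans (crit k) _; apply: ler_piMl; first by rewrite addr_ge0.
  by have /andP[_ h] := Hrho k; lra.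
have delcvg : del @ \oo --> (0 : R).
  have homE : {homo E : p q / (p <= q)%N >-> q <= p}.
    by move=> p q /subnK <-; exact: Ele.
  have lbE : has_lbound (range E) by exists 0 => _ [k _ <-].
  have hE := nonincreasing_cvgn homE lbE.
  have hE1 : (fun k => E k.+1) @ \oo --> inf (range E) by rewrite cvg_shiftS.
  have := cvgB hE hE1; rewrite subrr.
  suff -> : del = (E - fun k => E k.+1)%R by apply.
  by apply/funext => k.
have delP : forall e, 0 < e -> \forall k \near \oo, del k < e.
  move=> e e0; move/cvgr0Pnorm_lt : delcvg => /(_ e e0).
  by apply: filterS => k; rewrite ger0_norm.
have ipS : forall k, ip (s k - x k) (s k - x k) <= 2 * E 0%N / (1 - rho0).
  move=> k; rewrite ler_pdivlMr //.
  have := Sb k; have := delE k; have : 0 <= (1 - rho0) * Dyy k by rewrite mulr_ge0 // ?ltW.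
  rewrite /S; lra.
have ipX : forall k, ip (x k - xstar) (x k - xstar) <= 2 * E 0%N.
  move=> k; have := Ele0 k; have := Dy0 k; rewrite /E /a; lra.
pose B := 3 + 2 * E 0%N / (1 - rho0) + 2 * E 0%N + `|xstar|.
have sB : forall k, `|s k| <= B.
  move=> k.
  have -> : s k = (s k - x k) + (x k - xstar) + xstar.
    by apply/rowP => i; rewrite !mxE; ring.
  apply: le_trans (ler_normD _ _) _.
  apply: le_trans (lerD (ler_normD _ _) (lexx _)) _.
  have := nrm_le_1ip (s k - x k); have := nrm_le_1ip (x k - xstar).
  have := ipS k; have := ipX k; rewrite /B; lra.
have vcvg : v @ \oo --> (0 : 'rV[R]_n).
  apply/cvgr0Pnorm_lt => eps eps0.
  have Hv : forall k, sigma0 ^+ 2 * `|v k| ^+ 2 * (1 - rho0) <= 8 * del k.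
    move=> k.
    have e1 : sigma k *: v k = (x k - s k) + (s k - x k.+1).
      by rewrite Hx; apply/rowP => i; rewrite !mxE; ring.
    have h1 := ip_par (x k - s k) (s k - x k.+1).
    rewrite -e1 ipZl ipZr -opprB ipNl ipNr opprK in h1.
    have h2 : sigma0 ^+ 2 * `|v k| ^+ 2 <= sigma k * (sigma k * ip (v k) (v k)).
      rewrite mulrA -expr2; apply: ler_pM.
      - by rewrite sqr_ge0.
      - by rewrite sqr_ge0.
      - by have := Hsig k; rewrite !expr2; nra.
      - exact: nrm_le_ip.
    have h3 := Sb k; have h4 := S'b k.
    have h5 : (sigma0 ^+ 2 * `|v k| ^+ 2) * (1 - rho0) <=
              (4 * (S k + S' k)) * (1 - rho0).
      by apply: ler_wpM2r; [exact: ltW | rewrite /S /S'; lra].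
    have h6 : (4 * (S k + S' k)) * (1 - rho0) <= 8 * ((1 - rho0) * (S k + Dyy k)).
      by have := S0 k; have := Dyy0 k; nra.
    lra.
  pose P := sigma0 ^+ 2 * (1 - rho0).
  have P0 : 0 < P by rewrite mulr_gt0 // exprn_gt0.
  apply: filterS (delP (eps ^+ 2 * P / 8) _); last first.
    by rewrite divr_gt0 // mulr_gt0 // exprn_gt0.
  move=> k hk; have := Hv k.
  have : 8 * del k < eps ^+ 2 * P by move: hk; rewrite ltr_pdivlMr //; lra.
  rewrite /P => H1 H2.
  have H3 : `|v k| ^+ 2 * P < eps ^+ 2 * P by rewrite /P; lra.
  rewrite ltr_pM2r // in H3.
  have : 0 <= `|v k| by [].
  nra.
split; first by exists B.
  exact: vcvg.
apply/cvgr0Pnorm_lt => eps eps0.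
pose C := n%:R * (B + `|xstar|).
have C0 : 0 <= C by rewrite mulr_ge0 // addr_ge0 // (le_trans _ (sB 0%N)).
have eta0 : 0 < eps / (2 * (C + 1)) by rewrite divr_gt0 // mulr_gt0 // ltr_wpDl.
have hvF : \forall k \near \oo, `|v k| < eps / (2 * (C + 1)).
  by move/cvgr0Pnorm_lt : vcvg => /(_ _ eta0).
have d0 : 0 < eps * sigma0 / 2 by rewrite divr_gt0 // mulr_gt0.
apply: (filterS2 _ _ (delP _ d0) hvF) => k hd hv.
have hb : `|ip (v k) (s k - xstar)| <= C * `|v k|.
  apply: le_trans (ip_le_nrm _ _) _.
  have hs : `|s k - xstar| <= B + `|xstar|.
    by apply: le_trans (ler_normB _ _) _; rewrite lerD2r.
  rewrite /C -mulrA; apply: ler_wpM2l => //.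
  by rewrite mulrC; apply: ler_wpM2r.
move: hb; rewrite ler_norml => /andP[hb1 hb2].
have hM := Mb k; have hM0 := M0 k.
move: hv; rewrite ltr_pdivlMr ?mulr_gt0 ?ltr_wpDl // => hv.
have hv2 : C * `|v k| <= (C + 1) * `|v k| by rewrite ler_wpM2r // lerDl.
have hd2 : sigma0 * M k < eps * sigma0 / 2 by lra.
have hM2 : M k < eps / 2.
  by move: hd2; rewrite mulrC -mulrA (mulrC sigma0) mulrA ltr_pM2r //.
rewrite ltr_norml.
have -> : ip (u k) (y k.+1 - ystar) = M k - ip (v k) (s k - xstar) by rewrite /M; ring.
apply/andP; split; nra.
Qed.
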